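(* Let $G$ be a finite group, $D$ a Dedekind domain, $A$ a $DG$-module and $B$ a $DG$-submodule of $A$ such that: (i) $B=\bigoplus_{\lambda\in\Lambda}B_\lambda$ with each $B_\lambda$ a simple $DG$-submodule; (ii) $A/B$ is a simple $DG$-module and $A/B\not\cong_{DG}B_\lambda$ for all $\lambda\in\Lambda$; (iii) $\mathrm{Ann}_D(B)=\mathrm{Ann}_D(A/B)=P$ is a maximal ideal of $D$; (iv) $\mathrm{char}(D/P)=0$. Then there exists a $DG$-submodule $K$ of $A$ with $A=B\oplus K$. *)

(* Defs.v *)
From HB Require Import structures.
From Stdlib Require List.
From mathcomp Require Import all_boot fingroup all_algebra.
Set Implicit Arguments. Unset Strict Implicit. Unset Printing Implicit Defensive.
Import GRing.Theory.
Local Open Scope ring_scope.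

Definition ideal (D : comNzRingType) (I : D -> Prop) : Prop :=
  I 0 /\ (forall x y, I x -> I y -> I (x + y)) /\ (forall a x, I x -> I (a * x)).

Definition prime_ideal (D : comNzRingType) (I : D -> Prop) : Prop :=
  ideal I /\ ~ I 1 /\ (forall a b, I (a * b) -> I a \/ I b).

Definition maximal_ideal (D : comNzRingType) (I : D -> Prop) : Prop :=
  ideal I /\ ~ I 1 /\
  (forall J : D -> Prop, ideal J -> (forall x, I x -> J x) ->
     (forall x, J x -> I x) \/ J 1).

Definition noetherian_ring (D : comNzRingType) : Prop :=
  forall I : nat -> D -> Prop, (forall n, ideal (I n)) ->
    (forall n x, I n x -> I n.+1 x) ->
    exists N, forall n x, (N <= n)%N -> I n x -> I N x.

Definition integrally_closed (D : idomainType) : Prop :=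
  forall u : {fraction D}, integralOver (@tofrac D) u -> exists d : D, u = tofrac d.

Definition dedekind_domain (D : idomainType) : Prop :=
  noetherian_ring D /\ integrally_closed D /\
  (forall P : D -> Prop, prime_ideal P -> (exists x, P x /\ x <> 0) -> maximal_ideal P).

Definition dg_action (D : comNzRingType) (gT : finGroupType) (M : lmodType D)
    (rho : gT -> M -> M) : Prop :=
  (forall g (c : D) (u v : M), rho g (c *: u + v) = c *: rho g u + rho g v) /\
  (forall u, rho 1%g u = u) /\
  (forall g h u, rho (g * h)%g u = rho g (rho h u)).

Definition dg_submodule (D : comNzRingType) (gT : finGroupType) (M : lmodType D)
    (rho : gT -> M -> M) (S : M -> Prop) : Prop :=
  S 0 /\ (forall u v, S u -> S v -> S (u + v)) /\
  (forall (c : D) u, S u -> S (c *: u)) /\ (forall g u, S u -> S (rho g u)).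

Definition simple_dg_submodule (D : comNzRingType) (gT : finGroupType)
    (M : lmodType D) (rho : gT -> M -> M) (S : M -> Prop) : Prop :=
  dg_submodule rho S /\ (exists x, S x /\ x <> 0) /\
  (forall T : M -> Prop, dg_submodule rho T -> (forall x, T x -> S x) ->
     (forall x, T x -> x = 0) \/ (forall x, S x -> T x)).

Definition simple_dg_module (D : comNzRingType) (gT : finGroupType)
    (M : lmodType D) (rho : gT -> M -> M) : Prop :=
  simple_dg_submodule rho (fun _ => True).

Definition internal_direct_sum (D : comNzRingType) (M : lmodType D) (L : Type)
    (B : M -> Prop) (Bl : L -> M -> Prop) : Prop :=
  (forall x, B x <-> exists (s : seq L) (f : L -> M),
       (forall l, Bl l (f l)) /\ x = \sum_(l <- s) f l) /\
  (forall l x, Bl l x -> forall (s : seq L) (f : L -> M),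
       (forall l', List.In l' s -> l' <> l) -> (forall l', Bl l' (f l')) ->
       x = \sum_(i <- s) f i -> x = 0).

(* pi : A -> Q is a surjective DG-homomorphism with kernel B, i.e. Q is
   (a model of) the quotient DG-module A/B with projection pi. *)
Definition dg_quotient_map (D : comNzRingType) (gT : finGroupType)
    (A Q : lmodType D) (rhoA : gT -> A -> A) (rhoQ : gT -> Q -> Q)
    (B : A -> Prop) (pi : A -> Q) : Prop :=
  (forall (c : D) u v, pi (c *: u + v) = c *: pi u + pi v) /\
  (forall g u, pi (rhoA g u) = rhoQ g (pi u)) /\
  (forall q, exists u, pi u = q) /\
  (forall u, pi u = 0 <-> B u).

Definition dg_iso_onto (D : comNzRingType) (gT : finGroupType)
    (A Q : lmodType D) (rhoA : gT -> A -> A) (rhoQ : gT -> Q -> Q)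
    (S : A -> Prop) (f : A -> Q) : Prop :=
  (forall (c : D) u v, S u -> S v -> f (c *: u + v) = c *: f u + f v) /\
  (forall g u, S u -> f (rhoA g u) = rhoQ g (f u)) /\
  (forall u v, S u -> S v -> f u = f v -> u = v) /\
  (forall q, exists u, S u /\ f u = q).

Definition annihilator (D : comNzRingType) (M : lmodType D) (S : M -> Prop)
    (d : D) : Prop :=
  forall x, S x -> d *: x = 0.

(* Main.v *)
Require Import Defs.
From HB Require Import structures.
From mathcomp Require Import all_boot fingroup all_algebra.
From Stdlib Require Import Classical ClassicalEpsilon.
Import GRing.Theory.
Local Open Scope ring_scope.
Set Implicit Arguments. Unset Strict Implicit. Unset Printing Implicit Defensive.

Definition islin (D : comNzRingType) (M N : lmodType D) (f : M -> N) :=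
  forall (c : D) u v, f (c *: u + v) = c *: f u + f v.

Lemma lin0 (D : comNzRingType) (M N : lmodType D) (f : M -> N) :
  islin f -> f 0 = 0.
Proof.
move=> Hf; have := Hf 1 0 0; rewrite scaler0 addr0 scale1r => H.
by apply: (@addrI _ (f 0)); rewrite addr0 -H.
Qed.

Lemma linD (D : comNzRingType) (M N : lmodType D) (f : M -> N) :
  islin f -> forall u v, f (u + v) = f u + f v.
Proof. by move=> Hf u v; rewrite -[u]scale1r Hf !scale1r. Qed.

Lemma linZ (D : comNzRingType) (M N : lmodType D) (f : M -> N) :
  islin f -> forall c u, f (c *: u) = c *: f u.
Proof. by move=> Hf c u; rewrite -[c *: u]addr0 Hf lin0 // addr0. Qed.

Lemma linN (D : comNzRingType) (M N : lmodType D) (f : M -> N) :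
  islin f -> forall u, f (- u) = - f u.
Proof. by move=> Hf u; rewrite -scaleN1r linZ // scaleN1r. Qed.

Lemma linB (D : comNzRingType) (M N : lmodType D) (f : M -> N) :
  islin f -> forall u v, f (u - v) = f u - f v.
Proof. by move=> Hf u v; rewrite linD // linN. Qed.

Lemma linsum (D : comNzRingType) (M N : lmodType D) (f : M -> N) (I : finType)
  (F : I -> M) : islin f -> f (\sum_i F i) = \sum_i f (F i).
Proof.
move=> Hf; apply: (big_morph f (linD Hf) (lin0 Hf)).
Qed.

Lemma inv_mod (D : comNzRingType) (P : D -> Prop) (c : D) :
  maximal_ideal P -> ~ P c -> exists d y, P y /\ 1 = d * c + y.
Proof.
move=> [[P0 [PD PM]] [P1 Pmax]] Pc.
pose J x := exists d y, P y /\ x = d * c + y.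
have IJ : ideal J.
  split; first by exists 0, 0; rewrite mul0r addr0.
  split.
    move=> x y [d1 [y1 [Py1 ->]]] [d2 [y2 [Py2 ->]]].
    exists (d1 + d2), (y1 + y2); split; first exact: PD.
    by rewrite mulrDl -!addrA; congr (_ + _); rewrite addrCA.
  move=> a x [d [y [Py ->]]]; exists (a * d), (a * y); split; first exact: PM.
  by rewrite mulrDr mulrA.
have PJ : forall x, P x -> J x by move=> x Px; exists 0, x; rewrite mul0r add0r.
case: (Pmax J IJ PJ) => [JP | [d [y [Py E]]]]; last by exists d, y.
by exfalso; apply: Pc; apply: JP; exists 1, 0; rewrite mul1r addr0.
Qed.

Fixpoint Span (D : comNzRingType) (M : lmodType D) (ws : seq M) (u : M) : Prop :=
  match ws with
  | [::] => u = 0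
  | w :: ws' => exists (c : D) v, Span ws' v /\ u = c *: w + v
  end.

Lemma Span0 (D : comNzRingType) (M : lmodType D) (ws : seq M) : Span ws 0.
Proof. elim: ws => [|w ws IH] //=; exists 0, 0; by rewrite scale0r addr0. Qed.

Lemma SpanD (D : comNzRingType) (M : lmodType D) (ws : seq M) u v :
  Span ws u -> Span ws v -> Span ws (u + v).
Proof.
elim: ws u v => [|w ws IH] u v /=; first by move=> -> ->; rewrite addr0.
move=> [c [u' [Hu ->]]] [d [v' [Hv ->]]]; exists (c + d), (u' + v').
split; first exact: IH.
by rewrite scalerDl -!addrA; congr (_ + _); rewrite addrCA.
Qed.

Lemma SpanZ (D : comNzRingType) (M : lmodType D) (ws : seq M) (c : D) u :
  Span ws u -> Span ws (c *: u).
Proof.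
elim: ws u => [|w ws IH] u /=; first by move=> ->; rewrite scaler0.
move=> [d [u' [Hu ->]]]; exists (c * d), (c *: u'); split; first exact: IH.
by rewrite scalerDr scalerA.
Qed.

Lemma Span_mem (D : comNzRingType) (M : lmodType D) (ws : seq M) w :
  w \in ws -> Span ws w.
Proof.
elim: ws => [|w' ws IH] //=; rewrite inE => /orP [/eqP ->|/IH H].
  by exists 1, 0; split; [exact: Span0 | rewrite scale1r addr0].
by exists 0, w; rewrite scale0r add0r.
Qed.

Lemma Span_map (D : comNzRingType) (M N : lmodType D) (f : M -> N) (ws : seq M)
   (ws' : seq N) u :
  islin f -> (forall w, w \in ws -> Span ws' (f w)) -> Span ws u -> Span ws' (f u).
Proof.
move=> Hf; elim: ws u => [|w ws IH] u Hw /=; first by move=> E; rewrite E lin0 //; exact: Span0.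
move=> [c [v [Hv ->]]]; rewrite Hf; apply: SpanD; first apply: SpanZ.
  by apply: Hw; rewrite inE eqxx.
by apply: IH => // w' Hw'; apply: Hw; rewrite inE Hw' orbT.
Qed.

Lemma section_span (D : comNzRingType) (A Q : lmodType D) (pi : A -> Q)
   (P : D -> Prop) :
  islin pi -> (forall q, exists u, pi u = q) -> maximal_ideal P ->
  (forall d, P d -> forall a : A, d *: a = 0) ->
  (forall d, P d -> forall q : Q, d *: q = 0) ->
  forall ws : seq Q, exists s : Q -> A,
    (forall c u v, Span ws u -> Span ws v -> s (c *: u + v) = c *: s u + s v) /\
    (forall u, Span ws u -> pi (s u) = u).
Proof.
move=> Hpi Hsurj Pmax PA PQ.
have [[P0 [PD PM]] [P1 _]] := Pmax.
have PN : forall x, P x -> P (- x) by move=> x Px; rewrite -mulN1r; apply: PM.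
elim=> [|w ws [s' [Hl Hs]]].
  exists (fun _ => 0); split; first by move=> c u v _ _; rewrite scaler0 addr0.
  by move=> u /= ->; rewrite lin0.
case: (classic (Span ws w)) => Hw.
  have sub : forall u, Span (w :: ws) u -> Span ws u.
    by move=> u [c [v [Hv ->]]]; apply: SpanD => //; apply: SpanZ.
  exists s'; split; first by move=> c u v /sub Hu /sub Hv; apply: Hl.
  by move=> u /sub; apply: Hs.
have [aw Haw] := Hsurj w.
have U : forall c v c' v', Span ws v -> Span ws v' -> c *: w + v = c' *: w + v' ->
    P (c - c').
  move=> c v c' v' Hv Hv' E; apply: NNPP => Hc.
  have [d [y [Py E1]]] := inv_mod Pmax Hc.
  apply: Hw.
  have -> : w = d *: (v' - v).
    have E2 : (c - c') *: w = v' - v.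
      have E3 : c *: w = c' *: w + (v' - v) by rewrite addrA -E addrK.
      by rewrite scalerBl E3 addrAC subrr add0r.
    by rewrite -E2 scalerA -{1}[w]scale1r E1 scalerDl (PQ y Py) addr0.
  by apply: SpanZ; apply: SpanD => //; rewrite -scaleN1r; apply: SpanZ.
have U2 : forall c v c' v', Span ws v -> Span ws v' -> c *: w + v = c' *: w + v' ->
    c *: aw = c' *: aw /\ v = v'.
  move=> c v c' v' Hv Hv' E; have Pc := U _ _ _ _ Hv Hv' E.
  split; first by apply/eqP; rewrite -subr_eq0 -scalerBl PA.
  apply/eqP; rewrite -subr_eq0; apply/eqP.
  have -> : v - v' = (c' - c) *: w.
    have E4 : v = c' *: w + v' - c *: w by rewrite -E addrAC subrr add0r.
    by rewrite E4 scalerBl addrAC addrK.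
  by apply: PQ; rewrite -opprB; apply: PN.
pose dec u := epsilon (inhabits (0 : D, 0 : Q))
   (fun cv => Span ws cv.2 /\ u = cv.1 *: w + cv.2).
have decP : forall u, Span (w :: ws) u ->
    Span ws (dec u).2 /\ u = (dec u).1 *: w + (dec u).2.
  move=> u [c [v [Hv E]]]; apply: (epsilon_spec (inhabits (0 : D, 0 : Q))
   (fun cv => Span ws cv.2 /\ u = cv.1 *: w + cv.2)).
  by exists (c, v).
pose s u := (dec u).1 *: aw + s' (dec u).2.
have sE : forall u c v, Span ws v -> u = c *: w + v -> s u = c *: aw + s' v.
  move=> u c v Hv E.
  have [H1 H2] : Span (w :: ws) u by exists c, v.
  have [H1' H2'] := decP u (ex_intro _ c (ex_intro _ v (conj Hv E))).
  have [E1 E2] := U2 _ _ _ _ H1' Hv (etrans (esym H2') E).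
  by rewrite /s E1 E2.
exists s; split.
  move=> c u v [c1 [v1 [Hv1 ->]]] [c2 [v2 [Hv2 ->]]].
  rewrite (sE _ (c * c1 + c2) (c *: v1 + v2)); last first.
  - by rewrite scalerDl -scalerA scalerDr -!addrA; congr (_ + _); rewrite addrCA.
  - by apply: SpanD => //; apply: SpanZ.
  rewrite (sE _ c1 v1) // (sE _ c2 v2) // Hl // scalerDl -scalerA scalerDr.
  by rewrite -!addrA; congr (_ + _); rewrite addrCA.
move=> u [c [v [Hv ->]]]; rewrite (sE _ c v) // Hpi Haw Hs //.
Qed.

Fixpoint Csum (D : comNzRingType) (M : lmodType D) (L : Type)
   (Bl : L -> M -> Prop) (s : seq L) (x : M) : Prop :=
  match s with
  | [::] => x = 0
  | l :: s' => exists b c, Bl l b /\ Csum Bl s' c /\ x = b + c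
  end.

Definition subm (D : comNzRingType) (M : lmodType D) (S : M -> Prop) :=
  S 0 /\ (forall u v, S u -> S v -> S (u + v)) /\ (forall (c : D) u, S u -> S (c *: u)).

Lemma subm_of (D : comNzRingType) (gT : finGroupType) (M : lmodType D)
  (rho : gT -> M -> M) S : dg_submodule rho S -> subm S.
Proof. by move=> [H0 [HD [HZ _]]]. Qed.

Lemma Csum_subm (D : comNzRingType) (M : lmodType D) (L : Type)
   (Bl : L -> M -> Prop) s : (forall l, subm (Bl l)) -> subm (Csum Bl s).
Proof.
move=> HB; elim: s => [|l s [H0 [HD HZ]]] /=.
  split=> //; split; first by move=> u v -> ->; rewrite addr0.
  by move=> c u ->; rewrite scaler0.
have [B0 [BD BZ]] := HB l.
split; first by exists 0, 0; rewrite addr0.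
split.
  move=> u v [b [c [Hb [Hc ->]]]] [b' [c' [Hb' [Hc' ->]]]].
  exists (b + b'), (c + c'); do !split; [exact: BD | exact: HD |].
  by rewrite addrACA.
move=> d u [b [c [Hb [Hc ->]]]]; exists (d *: b), (d *: c); do !split; auto.
by rewrite scalerDr.
Qed.

Lemma subm_N (D : comNzRingType) (M : lmodType D) (S : M -> Prop) u :
  subm S -> S u -> S (- u).
Proof. by move=> [_ [_ HZ]] Hu; rewrite -scaleN1r; apply: HZ. Qed.

Lemma subm_B (D : comNzRingType) (M : lmodType D) (S : M -> Prop) u v :
  subm S -> S u -> S v -> S (u - v).
Proof. by move=> HS Hu Hv; have [_ [HD _]] := HS; apply: HD => //; apply: subm_N. Qed.

Lemma Csum_rho (D : comNzRingType) (M : lmodType D) (L : Type)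
   (Bl : L -> M -> Prop) s (r : M -> M) :
  islin r -> (forall l u, Bl l u -> Bl l (r u)) ->
  forall x, Csum Bl s x -> Csum Bl s (r x).
Proof.
move=> Hr HBr; elim: s => [|l s IH] x /=; first by move=> ->; rewrite lin0.
move=> [b [c [Hb [Hc ->]]]]; exists (r b), (r c); do !split; auto.
exact: linD.
Qed.

Lemma Csum_absorb (D : comNzRingType) (M : lmodType D) (L : Type)
   (Bl : L -> M -> Prop) s l b c : (forall l, subm (Bl l)) ->
  List.In l s -> Bl l b -> Csum Bl s c -> Csum Bl s (b + c).
Proof.
move=> HB; elim: s c => [|l2 s IH] c //= Hin Hb [b2 [c2 [Hb2 [Hc2 ->]]]].
case: Hin => [E|Hin].
  subst l2; exists (b + b2), c2; do !split => //; last by rewrite addrA.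
  by have [_ [HD _]] := HB l; apply: HD.
exists b2, (b + c2); do !split => //; first exact: IH.
by rewrite addrCA.
Qed.

Lemma Csum_of_sum (D : comNzRingType) (M : lmodType D) (L : Type)
   (Bl : L -> M -> Prop) s (f : L -> M) : (forall l, subm (Bl l)) ->
  (forall l, Bl l (f l)) -> Csum Bl s (\sum_(i <- s) f i).
Proof.
move=> HB Hf; elim: s => [|l s IH] /=; first by rewrite big_nil.
by exists (f l), (\sum_(i <- s) f i); rewrite big_cons.
Qed.

Definition upd (L : Type) (T : Type) (f : L -> T) (l : L) (v : T) :=
  fun i => if excluded_middle_informative (i = l) then v else f i.

Lemma sum_upd (D : comNzRingType) (M : lmodType D) (L : Type) (s : seq L)
  (f : L -> M) l v : ~ List.In l s -> \sum_(i <- s) upd f l v i = \sum_(i <- s) f i.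
Proof.
elim: s => [|l2 s IH] /= Hin; first by rewrite !big_nil.
rewrite !big_cons IH; last by move=> H; apply: Hin; right.
rewrite /upd; case: excluded_middle_informative => // E.
by exfalso; apply: Hin; left.
Qed.

Lemma Csum_fun (D : comNzRingType) (M : lmodType D) (L : Type)
   (Bl : L -> M -> Prop) s c : (forall l, subm (Bl l)) -> Csum Bl s c ->
  exists s2 (f : L -> M), (forall i, List.In i s2 -> List.In i s) /\
     (forall l', Bl l' (f l')) /\ c = \sum_(i <- s2) f i.
Proof.
move=> HB; elim: s c => [|l s IH] c /=.
  move=> ->; exists [::], (fun _ => 0); split => //; split; last by rewrite big_nil.
  by move=> l'; have [] := HB l'.
move=> [b [c2 [Hb [Hc2 ->]]]].
case: (classic (List.In l s)) => Hin.
  have Hc := Csum_absorb HB Hin Hb Hc2.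
  have [s2 [f [H1 [H2 H3]]]] := IH _ Hc.
  by exists s2, f; split => // i /H1; right.
have [s2 [f [H1 [H2 H3]]]] := IH _ Hc2.
exists (l :: s2), (upd f l b); split.
  by move=> i /= [->|/H1]; [left | right].
split.
  by move=> l'; rewrite /upd; case: excluded_middle_informative => [E|]; [subst l' |].
rewrite big_cons sum_upd; last by move=> /H1.
by rewrite H3 /upd; case: excluded_middle_informative.
Qed.

Lemma lin_comb (D : comNzRingType) (M : lmodType D) (p c : D) (a a' b b' : M) :
  p *: (c *: a + a') - (c *: b + b') = c *: (p *: a - b) + (p *: a' - b').
Proof.
by rewrite scalerDr scalerBr !scalerA [p * c]mulrC opprD addrACA.
Qed.

Lemma PA_zero (gT : finGroupType) (D : idomainType) (A : lmodType D)
    (rhoA : gT -> A -> A) (B : A -> Prop) (L : Type) (Bl : L -> A -> Prop)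
    (Q : lmodType D) (rhoQ : gT -> Q -> Q) (pi : A -> Q) (P : D -> Prop) :
  dg_action rhoA ->
  (forall l, simple_dg_submodule rhoA (Bl l)) ->
  internal_direct_sum B Bl ->
  dg_quotient_map rhoA rhoQ B pi ->
  simple_dg_module rhoQ ->
  (forall l, ~ exists f : A -> Q, dg_iso_onto rhoA rhoQ (Bl l) f) ->
  (forall d, annihilator B d <-> P d) ->
  (forall d, annihilator (fun _ : Q => True) d <-> P d) ->
  forall p, P p -> forall a : A, p *: a = 0.
Proof.
move=> [HrA _] HBl [HBsum HBind] [Hpi [pi_rho [Hsurj kerB]]] HQs Hniso AnnB AnnQ.
move=> p Pp a1; apply: NNPP => Ha1.
have HBs : forall l, subm (Bl l) by move=> l; have [/subm_of] := HBl l.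
have pB : forall b, B b -> p *: b = 0 by move=> b Hb; apply/(AnnB p).2.
have pQ : forall q : Q, p *: q = 0 by move=> q; apply/(AnnQ p).2.
have H1 : forall a, B (p *: a) by move=> a; apply/kerB; rewrite linZ // pQ.
have pC : forall (c : D) (u : A), p *: (c *: u) = c *: (p *: u).
  by move=> c u; rewrite !scalerA mulrC.
have H2 : forall u, p *: u = 0 -> pi u = 0.
  pose T q := exists u, pi u = q /\ p *: u = 0.
  have [_ [_ Hsimp]] := HQs.
  have TS : dg_submodule rhoQ T.
    split; first by exists 0; rewrite lin0 // scaler0.
    split; first by move=> _ _ [u [<- Hu]] [v [<- Hv]]; exists (u + v); rewrite linD // scalerDr Hu Hv addr0.
    split; first by move=> c _ [u [<- Hu]]; exists (c *: u); rewrite linZ // pC Hu scaler0.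
    move=> g _ [u [<- Hu]]; exists (rhoA g u); rewrite pi_rho; split => //.
    by rewrite -linZ // Hu lin0.
  case: (Hsimp T TS (fun _ _ => I)) => [HT | HT].
    by move=> u Hu; apply: HT; exists u.
  exfalso; have [u [Eu Hu]] := HT (pi a1) I.
  have : B (a1 - u) by apply/kerB; rewrite linB // Eu subrr.
  by move/pB; rewrite scalerBr Hu subr0.
pose S (x : A) := exists a : A, x = p *: a.
have rec : forall s x, Csum Bl s x -> S x -> x <> 0 -> False.
  elim=> [|l s' IH] x /=; first by move=> -> _.
  move=> [b [c [Hb [Hc Ex]]]] HS Hx.
  case: (classic (exists y, Csum Bl s' y /\ S y /\ y <> 0)).
    by move=> [y [Hy1 [Hy2 Hy3]]]; apply: (IH y).
  move=> Hn.
  have H3 : forall y, S y -> Csum Bl s' y -> y = 0.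
    by move=> y Hy1 Hy2; apply: NNPP => Hy3; apply: Hn; exists y.
  case: (classic (List.In l s')) => Hin.
    by apply: (IH x _ HS Hx); rewrite Ex; exact: (Csum_absorb HBs Hin Hb Hc).
  have Ind : forall y, Bl l y -> Csum Bl s' y -> y = 0.
    move=> y Hy Hcy; have [s2 [f [F1 [F2 F3]]]] := Csum_fun HBs Hcy.
    apply: (HBind l y Hy s2 f) => //.
    by move=> l' /F1 Hl' E; subst l'.
  have CS : subm (Csum Bl s') by apply: Csum_subm.
  have CS2 : subm (Csum Bl (l :: s')) by apply: Csum_subm.
  have Crho : forall g y, Csum Bl s' y -> Csum Bl s' (rhoA g y).
    move=> g; apply: Csum_rho => // l0 u Hu.
    by have [[_ [_ [_ Hr]]] _] := HBl l0; apply: Hr.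
  have Crho2 : forall g y, Csum Bl (l :: s') y -> Csum Bl (l :: s') (rhoA g y).
    move=> g; apply: Csum_rho => // l0 u Hu.
    by have [[_ [_ [_ Hr]]] _] := HBl l0; apply: Hr.
  have [a1' Ea1'] := HS.
  have Tall : forall q, exists a, pi a = q /\ Csum Bl (l :: s') (p *: a).
    pose T q := exists a, pi a = q /\ Csum Bl (l :: s') (p *: a).
    have [_ [_ Hsimp]] := HQs.
    have TS : dg_submodule rhoQ T.
      have [C0 [CD CZ]] := CS2.
      split; first by exists 0; rewrite lin0 // scaler0.
      split; first by move=> _ _ [u [<- Hu]] [v [<- Hv]]; exists (u + v); rewrite linD // scalerDr; auto.
      split; first by move=> d _ [u [<- Hu]]; exists (d *: u); rewrite linZ // pC; auto.
      move=> g _ [u [<- Hu]]; exists (rhoA g u); rewrite pi_rho; split => //.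
      by rewrite -linZ //; apply: Crho2.
    case: (Hsimp T TS (fun _ _ => I)) => [HT | HT]; last by move=> q; apply: HT.
    exfalso; apply: Hx; rewrite Ea1'.
    have : pi a1' = 0.
      apply: HT; exists a1'; split => //; rewrite -Ea1' /=.
      by exists b, c.
    by move/kerB/pB.
  pose T' b := Bl l b /\ exists a, Csum Bl s' (p *: a - b).
  have T'all : forall b, Bl l b -> exists a, Csum Bl s' (p *: a - b).
    have [HBls [_ Hsimp]] := HBl l.
    have [B0 [BD [BZ Brho]]] := HBls.
    have TS : dg_submodule rhoA T'.
      have [C0 [CD CZ]] := CS.
      split; first by split => //; exists 0; rewrite scaler0 subr0.
      split.
        move=> u v [Hu [a Ha]] [Hv [a' Ha']]; split; first exact: BD.
        exists (a + a'); have := lin_comb p 1 a a' u v; rewrite !scale1r => ->.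
        by apply: CD => //; apply: CZ.
      split.
        move=> d u [Hu [a Ha]]; split; first exact: BZ.
        exists (d *: a); have := lin_comb p d a 0 u 0; rewrite !addr0 scaler0 subr0 => ->.
        by rewrite addr0; apply: CZ.
      move=> g u [Hu [a Ha]]; split; first exact: Brho.
      exists (rhoA g a); rewrite -linZ // -linB //; exact: Crho.
    case: (Hsimp T' TS (fun x H => H.1)) => [HT | HT]; last by move=> b' /HT [].
    exfalso; apply: Hx.
    have Hb0 : b = 0.
      apply: HT; split => //; exists a1'; rewrite -Ea1' Ex addrC addKr //.
    by apply: H3 => //; rewrite Ex Hb0 add0r.
  have K : forall a a', Csum Bl s' (p *: a - p *: a') -> pi a = pi a'.
    move=> a a' Hc'; apply/eqP; rewrite -subr_eq0 -linB //; apply/eqP; apply: H2.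
    by rewrite scalerBr; apply: H3 => //; exists (a - a'); rewrite scalerBr.
  pose e b := epsilon (inhabits (0 : A)) (fun a => Csum Bl s' (p *: a - b)).
  have eP : forall b, Bl l b -> Csum Bl s' (p *: e b - b).
    move=> b0 Hb0; have [a Ha] := T'all b0 Hb0.
    exact: (epsilon_spec (inhabits (0 : A)) (fun a => Csum Bl s' (p *: a - b0)) (ex_intro _ a Ha)).
  pose f b := pi (e b).
  have fE : forall b a, Bl l b -> Csum Bl s' (p *: a - b) -> f b = pi a.
    move=> b0 a Hb0 Ha; apply: K.
    have -> : p *: e b0 - p *: a = (p *: e b0 - b0) - (p *: a - b0).
      by rewrite opprB addrA subrK.
    by apply: subm_B => //; apply: eP.
  have [HBls _] := HBl l.
  have [B0 [BD [BZ Brho]]] := HBls.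
  apply: (Hniso l); exists f; split.
    move=> d u v Hu Hv.
    rewrite (fE _ (d *: e u + e v)); first by rewrite Hpi.
      by apply: BD => //; apply: BZ.
    rewrite lin_comb; have [_ [CD CZ]] := CS.
    by apply: CD; [apply: CZ; apply: eP | apply: eP].
  split.
    move=> g u Hu; rewrite (fE _ (rhoA g (e u))); first by rewrite pi_rho.
      exact: Brho.
    by rewrite -linZ // -linB //; apply: Crho; apply: eP.
  split.
    move=> u v Hu Hv Efg; apply/eqP; rewrite -subr_eq0; apply/eqP; apply: Ind.
      by apply: subm_B.
    have Hd : p *: e u = p *: e v.
      apply/eqP; rewrite -subr_eq0 -scalerBr; apply/eqP; apply: pB; apply/kerB.
      by rewrite linB // -/(f u) -/(f v) Efg subrr.
    have -> : u - v = (p *: e v - v) - (p *: e u - u).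
      by rewrite Hd opprB [RHS]addrC addrA subrK.
    by apply: subm_B => //; apply: eP.
  move=> q; have [a [Ea [b0 [c0 [Hb0 [Hc0 E0]]]]]] := Tall q.
  exists b0; split => //; rewrite (fE _ a) //.
  by rewrite E0 addrC addKr.
have [s [f [Hf Ef]]] := (HBsum (p *: a1)).1 (H1 a1).
apply: (rec s (p *: a1)) => //; last by exists a1.
by rewrite Ef; apply: Csum_of_sum.
Qed.

Unset Implicit Arguments.
Theorem lemma7 (gT : finGroupType) (D : idomainType) (A : lmodType D)
    (rhoA : gT -> A -> A) (B : A -> Prop) (L : Type) (Bl : L -> A -> Prop)
    (Q : lmodType D) (rhoQ : gT -> Q -> Q) (pi : A -> Q) (P : D -> Prop) :
  dedekind_domain D ->
  dg_action rhoA ->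
  dg_submodule rhoA B ->
  (* (i) *)
  (forall l, simple_dg_submodule rhoA (Bl l)) ->
  internal_direct_sum B Bl ->
  (* (ii): Q with projection pi is the quotient A/B *)
  dg_action rhoQ ->
  dg_quotient_map rhoA rhoQ B pi ->
  simple_dg_module rhoQ ->
  (forall l, ~ exists f : A -> Q, dg_iso_onto rhoA rhoQ (Bl l) f) ->
  (* (iii) *)
  (forall d, annihilator B d <-> P d) ->
  (forall d, annihilator (fun _ : Q => True) d <-> P d) ->
  maximal_ideal P ->
  (* (iv) char(D/P) = 0 *)
  (forall n : nat, (0 < n)%N -> ~ P (n%:R)) ->
  exists K : A -> Prop, dg_submodule rhoA K /\
    (forall x, B x -> K x -> x = 0) /\
    (forall a, exists b k, B b /\ K k /\ a = b + k).
Proof.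
move=> _ HA HB HBl HBsum HQ Hquo HQs Hniso AnnB AnnQ Pmax Pchar.
have PA := PA_zero HA HBl HBsum Hquo HQs Hniso AnnB AnnQ.
have PQ : forall d, P d -> forall q : Q, d *: q = 0 by move=> d Pd q; apply/(AnnQ d).2.
have [HrA [HA1 HAM]] := HA.
have [HrQ [HQ1 HQM]] := HQ.
have [Hpi [pi_rho [Hsurj kerB]]] := Hquo.
have [_ [[q0 [_ Hq0]] Hsimp]] := HQs.
pose ws := [seq rhoQ h q0 | h <- enum gT].
have Sall : forall q, Span ws q.
  have TS : dg_submodule rhoQ (Span ws).
    split; first exact: Span0.
    split; first by move=> u v; apply: SpanD.
    split; first by move=> c u; apply: SpanZ.
    move=> g u; apply: Span_map => // w /mapP [h _ ->].
    by rewrite -HQM; apply: Span_mem; apply: map_f; rewrite mem_enum.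
  case: (Hsimp _ TS (fun _ _ => I)) => [HT|HT]; last by move=> q; apply: HT.
  exfalso; apply: Hq0; apply: HT; rewrite -(HQ1 q0); apply: Span_mem.
  by apply: map_f; rewrite mem_enum.
have [s [Hsl Hss]] := section_span Hpi Hsurj Pmax PA PQ ws.
have sl : islin s by move=> c u v; apply: Hsl.
have n0 : (0 < #|gT|)%N by apply/card_gt0P; exists 1%g.
have [d [y [Py E1]]] := inv_mod Pmax (Pchar #|gT| n0).
have E2 : d * #|gT|%:R = 1 - y by rewrite [in RHS]E1 addrK.
have dnQ : forall q : Q, (d * #|gT|%:R) *: q = q.
  by move=> q; rewrite E2 scalerBl scale1r (PQ y Py) subr0.
pose s' (q : Q) := d *: \sum_(g : gT) rhoA g (s (rhoQ (g^-1)%g q)).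
have s'l : islin s'.
  move=> c u v; rewrite /s' scalerA [c * d]mulrC -scalerA -scalerDr; congr (_ *: _).
  rewrite scaler_sumr -big_split /=; apply: eq_bigr => g _.
  by rewrite HrQ sl HrA.
have s'sec : forall q, pi (s' q) = q.
  move=> q; rewrite /s' linZ // linsum //.
  under eq_bigr => g _ do rewrite pi_rho Hss // -HQM mulgV HQ1.
  by rewrite sumr_const -scaler_nat scalerA dnQ.
have s'eq : forall h q, s' (rhoQ h q) = rhoA h (s' q).
  move=> h q; rewrite /s' (linZ (HrA h)) (linsum _ (HrA h)); congr (_ *: _).
  rewrite (reindex_inj (mulgI h)) /=; apply: eq_bigr => g _.
  by rewrite -!HQM -HAM invMg -mulgA mulVg mulg1.
exists (fun a => exists q, a = s' q); split.
  split; first by exists 0; rewrite (lin0 s'l).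
  split; first by move=> _ _ [u ->] [v ->]; exists (u + v); rewrite (linD s'l).
  split; first by move=> c _ [u ->]; exists (c *: u); rewrite (linZ s'l).
  by move=> g _ [u ->]; exists (rhoQ g u); rewrite s'eq.
split.
  move=> x /kerB Hx [q Eq]; rewrite Eq in Hx *; rewrite s'sec in Hx.
  by rewrite Hx (lin0 s'l).
move=> a; exists (a - s' (pi a)), (s' (pi a)); split; last by split; [exists (pi a) | rewrite subrK].
by apply/kerB; rewrite (linB Hpi) // s'sec subrr.
Qed.
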